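(* Let $(p_n)$ be a scale and let $\mathbb{Z}_{(p_n)}$ be the odometer with scale $(p_n)$. Then the stabilized automorphism group $\operatorname{Aut}^{(\infty)}(\mathbb{Z}_{(p_n)},+\mathbf{1})$ is isomorphic (as a group) to the direct limit of a sequence of group monomorphisms $G_0\to G_1\to G_2\to\cdots$ in which each group $G_j$ is of the form $\left(\mathbb{Z}_{(q_n)}\right)^{p_k}\rtimes \operatorname{Sym}(p_k)$, where $\mathbb{Z}_{(q_n)}$ is an odometer that is a factor of $\mathbb{Z}_{(p_n)}$ and $p_k$ is a term of the scale $(p_n)$.
   Context: A scale is a sequence $(p_n)_{n\ge1}$ of positive integers with $p_n\mid p_{n+1}$ for all $n$; scales are assumed not eventually constant. The odometer with scale $(p_n)$ is the compact group $\mathbb{Z}_{(p_n)}=\{(x_n)\in\prod_{n\ge1}\mathbb{Z}/p_n\mathbb{Z} : x_{n+1}\equiv x_n \bmod p_n \text{ for all } n\}$ (product topology), with $\mathbf{1}=(1,1,1,\dots)$; the dynamical system $(\mathbb{Z}_{(p_n)},+\mathbf{1})$ is translation by $\mathbf{1}$. For a compact metric space $X$ and a homeomorphism $T$, $\operatorname{Aut}(X,T)$ is the group of homeomorphisms of $X$ commuting with $T$, and the stabilized automorphism group is $\operatorname{Aut}^{(\infty)}(X,T)=\bigcup_{n\ge1}\operatorname{Aut}(X,T^n)\subseteq\operatorname{Homeo}(X)$. A factor of $(\mathbb{Z}_{(p_n)},+\mathbf{1})$ is a system $(\mathbb{Z}_{(q_n)},+\mathbf{1})$ admitting a continuous surjection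 from $\mathbb{Z}_{(p_n)}$ intertwining the translations. $\operatorname{Sym}(n)$ is the symmetric group on $n$ symbols, and in $H^{n}\rtimes\operatorname{Sym}(n)$ the symmetric group acts by permuting coordinates. *)

(* Defs.v *)
From mathcomp Require Import all_boot all_fingroup.
Set Implicit Arguments. Unset Strict Implicit. Unset Printing Implicit Defensive.

(* A scale (p_n), indexed from n = 0 here (p 0 is the paper's p_1):
   positive integers, p_n | p_{n+1}, not eventually constant. *)
Record scale := Scale {
  sc :> nat -> nat;
  sc_pos : forall n, 0 < sc n;
  sc_dvd : forall n, sc n %| sc n.+1;
  sc_nec : ~ (exists N, forall n, N <= n -> sc n = sc N) }.

(* The odometer Z_(p_n): compatible sequences x_n in Z/p_n (represented by
   0 <= x_n < p_n) with x_{n+1} = x_n mod p_n. *)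
Definition odo_prop (p : scale) (x : nat -> nat) :=
  forall n, x n < p n /\ x n.+1 %% p n = x n.
Definition odo (p : scale) := {x : nat -> nat | odo_prop p x}.

Lemma odo_add_prop (p : scale) (x y : odo p) :
  odo_prop p (fun n => (proj1_sig x n + proj1_sig y n) %% p n).
Proof.
move=> n; split; first by rewrite ltn_pmod // sc_pos.
rewrite modn_dvdm ?sc_dvd //.
case: x y => x hx [y hy] /=.
by rewrite -modnDm (proj2 (hx n)) (proj2 (hy n)).
Qed.

Definition odo_add (p : scale) (x y : odo p) : odo p :=
  exist _ _ (odo_add_prop x y).

Lemma odo_one_prop (p : scale) : odo_prop p (fun n => 1 %% p n).
Proof.
move=> n; split; first by rewrite ltn_pmod // sc_pos.
by rewrite modn_dvdm ?sc_dvd.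
Qed.

Definition odo_one (p : scale) : odo p := exist _ _ (odo_one_prop p).

Definition odo_T (p : scale) (x : odo p) : odo p := odo_add x (odo_one p).

(* Continuity for the product topology (discrete factors): the preimage of
   each subbasic open set {y | y_n = a} is a neighbourhood of each of its
   points, i.e. contains a basic cylinder {y | y_i = x_i, i <= m}. *)
Definition odo_continuous (p q : scale) (f : odo p -> odo q) :=
  forall (x : odo p) (n : nat), exists m : nat, forall y : odo p,
    (forall i, i <= m -> proj1_sig y i = proj1_sig x i) ->
    proj1_sig (f y) n = proj1_sig (f x) n.

Definition odo_homeo (p : scale) (f : odo p -> odo p) :=
  odo_continuous f /\
  exists g : odo p -> odo p, odo_continuous g /\
    (forall x, g (f x) = x) /\ (forall x, f (g x) = x).

Definition in_aut (p : scale) (n : nat) (f : odo p -> odo p) :=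
  odo_homeo f /\ forall x, f (iter n (@odo_T p) x) = iter n (@odo_T p) (f x).

Definition in_stab_aut (p : scale) (f : odo p -> odo p) :=
  exists n, 0 < n /\ in_aut n f.

Definition is_factor (p q : scale) :=
  exists pi : odo p -> odo q,
    odo_continuous pi /\ (forall y, exists x, pi x = y) /\
    (forall x, pi (odo_T x) = odo_T (pi x)).

(* The semidirect product (Z_(q_n))^m x| Sym(m); Sym(m) acts by permuting
   coordinates: (a, s) * (b, t) = (i |-> a i + b (s i), s * t)
   (mathcomp's permutation product: (s * t) i = t (s i)). *)
Definition sdp (q : scale) (m : nat) := (('I_m -> odo q) * {perm 'I_m})%type.

Definition sdp_mul (q : scale) (m : nat) (g h : sdp q m) : sdp q m :=
  (fun i => odo_add (g.1 i) (h.1 (g.2 i)), (g.2 * h.2)%g).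

(* Main.v *)
Require Import Defs.
From mathcomp Require Import all_boot all_fingroup zify.
From Stdlib Require Import FunctionalExtensionality ProofIrrelevance ClassicalEpsilon Classical.
Set Implicit Arguments. Unset Strict Implicit. Unset Printing Implicit Defensive.

Section Odo.
Variable p : scale.
Local Notation X := (odo p).
Local Notation v x := (proj1_sig x).

Lemma odo_eq (x y : X) : (forall n, v x n = v y n) -> x = y.
Proof.
case: x y => x hx [y hy] /= E.
have exy : x = y by apply: functional_extensionality.
subst y; f_equal; apply: proof_irrelevance.
Qed.

Lemma pP n : 0 < p n. Proof. exact: sc_pos. Qed.

Lemma p_dvd m n : m <= n -> p m %| p n.
Proof.
elim: n => [|n IH]; first by rewrite leqn0 => /eqP ->.
rewrite leq_eqVlt => /orP [/eqP -> //|]; rewrite ltnS => /IH H.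
exact: dvdn_trans H (sc_dvd p n).
Qed.

Lemma vlt (x : X) n : v x n < p n. Proof. exact: (proj1 (proj2_sig x n)). Qed.

Lemma coord_low (x : X) m n : m <= n -> v x n %% p m = v x m.
Proof.
elim: n => [|n IH]; first by rewrite leqn0 => /eqP ->; rewrite modn_small // vlt.
rewrite leq_eqVlt => /orP [/eqP ->|]; first by rewrite modn_small // vlt.
rewrite ltnS => H; rewrite -(IH H) -(proj2 (proj2_sig x n)).
by rewrite modn_dvdm // p_dvd.
Qed.

Lemma agree_low (x y : X) m n : m <= n -> v x n = v y n -> v x m = v y m.
Proof. by move=> H E; rewrite -(coord_low x H) -(coord_low y H) E. Qed.

Lemma natO_prop c : odo_prop p (fun n => c %% p n).
Proof.
move=> n; split; first by rewrite ltn_pmod // pP.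
by rewrite modn_dvdm ?sc_dvd.
Qed.
Definition natO c : X := exist _ _ (natO_prop c).

Lemma oppO_prop (x : X) : odo_prop p (fun n => (p n - v x n) %% p n).
Proof.
move=> n; split; first by rewrite ltn_pmod // pP.
rewrite modn_dvdm ?sc_dvd //.
apply/eqP; rewrite -(eqn_modDr (v x n.+1)).
rewrite subnK; last exact: ltnW (vlt x n.+1).
rewrite -modnDmr (proj2 (proj2_sig x n)) subnK; last exact: ltnW (vlt x n).
by rewrite modnn; exact: p_dvd (leqnSn n).
Qed.
Definition oppO (x : X) : X := exist _ _ (oppO_prop x).

Local Notation "x + y" := (odo_add x y).
Definition zO := natO 0.

Lemma vadd (x y : X) n : v (x + y) n = (v x n + v y n) %% p n. Proof. by []. Qed.
Lemma vnat c n : v (natO c) n = c %% p n. Proof. by []. Qed.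
Lemma vopp (x : X) n : v (oppO x) n = (p n - v x n) %% p n. Proof. by []. Qed.

Lemma addC (x y : X) : x + y = y + x.
Proof. by apply: odo_eq => n; rewrite !vadd addnC. Qed.
Lemma addA (x y z : X) : x + (y + z) = x + y + z.
Proof. by apply: odo_eq => n; rewrite !vadd modnDmr modnDml addnA. Qed.
Lemma add0 (x : X) : zO + x = x.
Proof. by apply: odo_eq => n; rewrite vadd vnat mod0n add0n modn_small // vlt. Qed.
Lemma addN (x : X) : x + oppO x = zO.
Proof.
apply: odo_eq => n; rewrite vadd vopp vnat mod0n modnDmr subnKC ?modnn //.
exact: ltnW (vlt x n).
Qed.
Lemma addCA (x y z : X) : x + (y + z) = y + (x + z).
Proof. by rewrite addA (addC x) -addA. Qed.
Lemma addAC (x y z : X) : x + y + z = x + z + y.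
Proof. by rewrite -addA (addC y) addA. Qed.
Lemma addNK (x y : X) : oppO x + (x + y) = y.
Proof. by rewrite addA (addC (oppO x)) addN add0. Qed.
Lemma addKN (x y : X) : x + (oppO x + y) = y.
Proof. by rewrite addA addN add0. Qed.
Lemma addI (x y z : X) : x + y = x + z -> y = z.
Proof. by move=> E; rewrite -(addNK x y) E addNK. Qed.
Lemma natD a b : natO (a + b)%N = natO a + natO b.
Proof. by apply: odo_eq => n; rewrite vadd !vnat modnDm. Qed.

Lemma iterT n (x : X) : iter n (@odo_T p) x = x + natO n.
Proof.
elim: n => [|n IH] /=; first by rewrite addC add0.
rewrite IH /odo_T -addA; congr (_ + _); apply: odo_eq => m.
by rewrite vadd !vnat /= modnDm addn1.
Qed.
End Odo.

Section Odo2.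
Variable p : scale.
Local Notation X := (odo p).
Local Notation v x := (proj1_sig x).
Local Notation "x + y" := (odo_add x y).

Definition Pj j (z : X) := v z j = 0.

Lemma vnat_small l n : l < p n -> v (natO p l) n = l.
Proof. by move=> H; rewrite vnat modn_small. Qed.

Lemma Pj_add j (x y : X) : Pj j x -> Pj j y -> Pj j (x + y).
Proof. by rewrite /Pj vadd => -> ->; rewrite mod0n. Qed.

Definition cls j (x : X) : 'I_(p j) := Ordinal (vlt x j).
Definition rr j (x : X) : X := x + oppO (natO p (v x j)).

Lemma rr_P j x : Pj j (rr j x).
Proof.
rewrite /Pj /rr vadd vopp vnat (modn_small (vlt x j)) modnDmr subnKC ?modnn //.
exact: ltnW (vlt x j).
Qed.

Lemma decomp j x : x = natO p (v x j) + rr j x.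
Proof. by rewrite /rr addCA addN addC add0. Qed.

Lemma cls_lw j (l : nat) w : l < p j -> Pj j w -> v (natO p l + w) j = l.
Proof. by move=> hl; rewrite /Pj vadd vnat => ->; rewrite addn0 !modn_small. Qed.

Lemma rr_lw j (l : nat) w : l < p j -> Pj j w -> rr j (natO p l + w) = w.
Proof.
move=> hl hw; rewrite /rr cls_lw // addC addA (addC _ (natO p l)) addN add0 //.
Qed.

Lemma closure_shift (F : X -> X) z : odo_continuous F ->
  (forall M, exists w, (forall x, F (x + w) = F x + w) /\ v w M = v z M) ->
  forall x, F (x + z) = F x + z.
Proof.
move=> cF hz x; apply: odo_eq => N.
have [M hM] := cF (x + z) N.
have [w [hw ew]] := hz (maxn M N).
have agr : forall i, i <= maxn M N -> v w i = v z i.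
  by move=> i hi; apply: agree_low hi ew.
rewrite -(hM (x + w)); last first.
  by move=> i hi; rewrite !vadd agr // (leq_trans hi) // leq_maxl.
by rewrite hw !vadd agr // leq_maxr.
Qed.

Lemma shift_mul n (F : X -> X) : in_aut n F ->
  forall c x, F (x + natO p (n * c)) = F x + natO p (n * c).
Proof.
move=> [_ hT] c; elim: c => [|c IH] x.
  have e : natO p (n * 0) = zO p by apply: odo_eq => m; rewrite muln0.
  by rewrite e !(addC _ (zO p)) !add0.
have e1 : forall y, F (y + natO p n) = F y + natO p n by move=> y; rewrite -!iterT hT.
by rewrite mulnS natD addA IH e1 -!addA (addC (natO p n)).
Qed.

Lemma stab_seq (g : nat -> nat) bound : (forall M, g M <= bound) ->
  (forall a b, a <= b -> g a <= g b) -> exists j, forall M, j <= M -> g M = g j.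
Proof.
move=> hb hm.
suff H : forall k j0, bound - g j0 <= k -> exists j, forall M, j <= M -> g M = g j.
  exact: (H _ 0 (leqnn _)).
elim=> [|k IH] j0 hk.
  exists j0 => M hM; have := hb M; have := hm j0 M hM; lia.
case: (classic (forall M, j0 <= M -> g M = g j0)) => [h|h]; first by exists j0.
have [M hM] : exists M, ~ (j0 <= M -> g M = g j0).
  by apply: not_all_ex_not.
have hjM : j0 <= M by case: (boolP (j0 <= M)) => // /negbTE hn; case: hM; rewrite hn.
have ne : g M <> g j0 by move=> e; apply: hM.
have lt : g j0 < g M by rewrite ltn_neqAle hm // andbT; apply/eqP => e; apply: ne.
apply: (IH M); have := hb M; lia.
Qed.

Lemma aut_closure n F : 0 < n -> in_aut n F ->
  exists j, forall z, Pj j z -> forall x, F (x + z) = F x + z.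
Proof.
move=> n0 hF; have cF := proj1 (proj1 hF).
pose g M := gcdn n (p M).
have [j hj] : exists j, forall M, j <= M -> g M = g j.
  apply: (stab_seq (bound := n)).
    by move=> M; apply: dvdn_leq => //; apply: dvdn_gcdl.
  move=> a b hab; apply: dvdn_leq; first by rewrite gcdn_gt0 n0.
  by rewrite dvdn_gcd dvdn_gcdl /= (dvdn_trans (dvdn_gcdr _ _)) // p_dvd.
exists j => z hz x; apply: closure_shift => // M0.
pose M := maxn M0 j.
have hjM : j <= M by rewrite leq_maxr.
have dM : g M %| p j by rewrite hj // /g dvdn_gcdr.
have dz : p j %| v z M.
  by apply/eqP; rewrite (coord_low z hjM); exact: hz.
case: (egcdnP (p M) n0) => km kn e _.
exists (natO p (n * (km * (v z M %/ g M)))); split; first exact: shift_mul.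
apply: (agree_low (leq_maxl M0 j)).
rewrite vnat mulnA (mulnC n) e mulnDl -mulnA.
rewrite -/(g M) (mulnC (g M)) divnK; last exact: dvdn_trans dM dz.
by rewrite -/M mulnCA mulnC modnMDl modn_small // vlt.
Qed.

Definition inf (A : nat -> Prop) := forall N0, exists N, N0 <= N /\ A N.

Lemma pigeon (A : nat -> Prop) (f : nat -> nat) K : inf A ->
  (forall N, A N -> f N < K) -> exists u, u < K /\ inf (fun N => A N /\ f N = u).
Proof.
move=> hA hf; apply: NNPP => hn.
have hb : forall u, u < K -> exists B, forall N, B <= N -> ~ (A N /\ f N = u).
  move=> u hu; apply: NNPP => hB; apply: hn; exists u; split => // N0.
  apply: NNPP => hN0; apply: hB; exists N0 => N hN hAN; apply: hN0; exists N; split => //.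
suff [B hB] : exists B, forall N u, B <= N -> u < K -> ~ (A N /\ f N = u).
  have [N [hN hAN]] := hA B.
  by apply: (hB N (f N) hN (hf N hAN)).
have : K <= K by [].
elim: {1 3}K => [|k IH] hk; first by exists 0 => N u _.
have [B1 h1] := IH (ltnW hk).
have [B2 h2] := hb k hk.
exists (maxn B1 B2) => N u hN; rewrite ltnS leq_eqVlt => /orP [/eqP ->|hu].
  by apply: h2; apply: leq_trans hN; rewrite leq_maxr.
by apply: h1 => //; apply: leq_trans hN; rewrite leq_maxl.
Qed.

Section Compact.
Variable z : nat -> X.
Definition good m u := inf (fun N => v (z N) m = u).
Fixpoint xs m : nat :=
  match m with
  | 0 => epsilon (inhabits 0) (fun u => u < p 0 /\ good 0 u)
  | m'.+1 => epsilon (inhabits 0) (fun u => u < p m'.+1 /\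
                inf (fun N => v (z N) m'.+1 = u /\ v (z N) m' = xs m'))
  end.

Lemma inf_true : inf (fun _ => True).
Proof. by move=> N0; exists N0. Qed.

Lemma xs_spec m : xs m < p m /\ good m (xs m) /\
  inf (fun N => v (z N) m.+1 = xs m.+1 /\ v (z N) m = xs m) /\ xs m.+1 < p m.+1.
Proof.
have base : xs 0 < p 0 /\ good 0 (xs 0).
  apply: (epsilon_spec (inhabits 0) (fun u => u < p 0 /\ good 0 u)).
  have [u [hu hinf]] := pigeon (A := fun _ => True) (f := fun N => v (z N) 0) inf_true
     (fun N _ => vlt (z N) 0).
  exists u; split => // N0; have [N [hN [_ e]]] := hinf N0; by exists N.
have step : forall k, xs k < p k /\ good k (xs k) ->
   xs k.+1 < p k.+1 /\ inf (fun N => v (z N) k.+1 = xs k.+1 /\ v (z N) k = xs k).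
  move=> {}m [_ hg] /=.
  apply: (epsilon_spec (inhabits 0) (fun u => u < p m.+1 /\
                inf (fun N => v (z N) m.+1 = u /\ v (z N) m = xs m))).
  have [u [hu hinf]] := pigeon (f := fun N => v (z N) m.+1) hg (fun N _ => vlt (z N) m.+1).
  exists u; split => // N0; have [N [hN [e1 e2]]] := hinf N0; by exists N.
suff H : xs m < p m /\ good m (xs m).
  move: H => [H1 H2]; have [h1 h2] := step m (conj H1 H2); by repeat split.
elim: m => [//|m [h1 h2]].
have [h3 h4] := step m (conj h1 h2); split => // N0.
by have [N [hN [e1 e2]]] := h4 N0; exists N.
Qed.

Lemma xs_prop : odo_prop p xs.
Proof.
move=> m; have [h1 [_ [h3 _]]] := xs_spec m; split => //.
have [N [_ [e1 e2]]] := h3 0.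
by rewrite -e1 -e2 (proj2 (proj2_sig (z N) m)).
Qed.

Lemma seq_compact : exists x : X, forall m N0, exists N, N0 <= N /\ v (z N) m = v x m.
Proof.
exists (exist _ xs xs_prop) => m /=.
exact: (proj1 (proj2 (xs_spec m))).
Qed.
End Compact.
End Odo2.

Section Shift.
Variable p : scale.
Variable j : nat.
Local Notation v x := (proj1_sig x).

Definition qf n := p (n + j) %/ p j.
Lemma qf_mul n : qf n * p j = p (n + j).
Proof. by rewrite /qf divnK // p_dvd // leq_addl. Qed.
Lemma qf_pos n : 0 < qf n.
Proof. by rewrite /qf divn_gt0 ?pP // dvdn_leq ?pP // p_dvd // leq_addl. Qed.
Lemma qf_dvd n : qf n %| qf n.+1.
Proof. by rewrite -(dvdn_pmul2r (pP p j)) !qf_mul p_dvd // addSn. Qed.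
Lemma qf_nec : ~ (exists N, forall n, N <= n -> qf n = qf N).
Proof.
move=> [N hN]; apply: (@sc_nec p); exists (N + j) => n hn.
have e : n = (n - j) + j by lia.
by rewrite e -!qf_mul hN //; lia.
Qed.
Definition qs : scale := Scale qf_pos qf_dvd qf_nec.

Lemma qsE n : qs n = qf n. Proof. by []. Qed.

Lemma mod_down a b m : a %% p (m + j) = b %% p (m + j) -> a %% p m = b %% p m.
Proof.
move=> e; have d : p m %| p (m + j) by rewrite p_dvd // leq_addr.
by rewrite -(modn_dvdm a d) -(modn_dvdm b d) e.
Qed.

Lemma pj_mod a m : p j * (a %% qf m) = (p j * a) %% p (m + j).
Proof. by rewrite muln_modr (mulnC (p j) (qf m)) qf_mul. Qed.

Lemma iota_prop (y : odo qs) : odo_prop p (fun m => (p j * v y m) %% p m).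
Proof.
move=> m; split; first by rewrite ltn_pmod // pP.
rewrite modn_dvdm ?sc_dvd //; apply: mod_down.
by rewrite -!pj_mod -(proj2 (proj2_sig y m)) qsE modn_mod.
Qed.
Definition jota (y : odo qs) : odo p := exist _ _ (iota_prop y).

Lemma viota y m : v (jota y) m = (p j * v y m) %% p m. Proof. by []. Qed.

Lemma iota_add y y' : jota (odo_add y y') = odo_add (jota y) (jota y').
Proof.
apply: odo_eq => m; rewrite viota !vadd !viota modnDm; apply: mod_down.
by rewrite qsE pj_mod modn_mod mulnDr.
Qed.

Lemma iota_coord y n : v (jota y) (n + j) = p j * v y n.
Proof.
rewrite viota -pj_mod -qsE; congr (_ * _).
by apply: (coord_low y); rewrite leq_addr.
Qed.

Lemma iota_inj : injective jota.
Proof.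
move=> y y' e; apply: odo_eq => n.
have := iota_coord y n; rewrite e iota_coord => /eqP.
by rewrite eqn_pmul2l ?pP // => /eqP.
Qed.

Lemma iota_P y : Pj j (jota y).
Proof. by rewrite /Pj viota modnMr. Qed.

Lemma kappa_prop (w : odo p) : odo_prop qs (fun n => (v w (n + j) %/ p j) %% qf n).
Proof.
move=> n; split; first by rewrite ltn_pmod // qf_pos.
rewrite qsE modn_dvdm ?qf_dvd // !modn_divl !qf_mul.
rewrite (coord_low w (m := n + j) (n := n.+1 + j)) ?addSn //.
by rewrite modn_small // vlt.
Qed.
Definition kappa (w : odo p) : odo qs := exist _ _ (kappa_prop w).

Lemma iota_kappa w : Pj j w -> jota (kappa w) = w.
Proof.
move=> hw; apply: odo_eq => m; rewrite viota /=.
rewrite (@modn_small (v w (m + j) %/ p j)); last by rewrite ltn_divLR ?pP // qf_mul vlt.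
have dj : p j %| v w (m + j).
  by apply/eqP; rewrite (coord_low w (m := j)) ?leq_addl.
by rewrite mulnC divnK // coord_low // leq_addr.
Qed.

Lemma pi_prop (x : odo p) : odo_prop qs (fun n => v x (n + j) %% qf n).
Proof.
move=> n; split; first by rewrite ltn_pmod // qf_pos.
rewrite qsE modn_dvdm ?qf_dvd //.
have d : qf n %| p (n + j) by rewrite -qf_mul dvdn_mulr.
by rewrite -(modn_dvdm _ d) (coord_low x (m := n + j) (n := n.+1 + j)) // addSn.
Qed.
Definition pi (x : odo p) : odo qs := exist _ _ (pi_prop x).

Lemma qs_factor : is_factor p qs.
Proof.
exists pi; split; [|split].
- move=> x n; exists (n + j) => y hy /=; by rewrite hy.
- move=> y.
  pose z N := natO p (v y N).
  have [x hx] := seq_compact z.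
  exists x; apply: odo_eq => n /=.
  have [N [hN e]] := hx (n + j) n.
  rewrite -e /z vnat.
  have d : qf n %| p (n + j) by rewrite -qf_mul dvdn_mulr.
  by rewrite (modn_dvdm _ d); apply: (coord_low y hN).
- move=> x; apply: odo_eq => n /=.
  have d : qf n %| p (n + j) by rewrite -qf_mul dvdn_mulr.
  by rewrite (modn_dvdm _ d) -modnDmr (modn_dvdm 1 d) modnDmr modnDm.
Qed.
End Shift.

Section Psi.
Variable p : scale.
Variable j : nat.
Local Notation v x := (proj1_sig x).
Local Notation X := (odo p).
Local Notation "x + y" := (odo_add x y).
Local Notation G := (sdp (qs p j) (p j)).

Definition psi (g : G) (x : X) : X :=
  let l := (g.2^-1)%g (cls j x) in rr j x + (natO p l + jota (g.1 l)).

Definition Kp (g : G) (c : 'I_(p j)) := natO p ((g.2^-1)%g c) + jota (g.1 ((g.2^-1)%g c)).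
Lemma psi_def g x : psi g x = rr j x + Kp g (cls j x).
Proof. by []. Qed.

Lemma cls_lwO (l : 'I_(p j)) w : Pj j w -> cls j (natO p l + w) = l.
Proof. by move=> hw; apply: ord_inj; exact: cls_lw. Qed.

Lemma psi_lw g (l : 'I_(p j)) w : Pj j w ->
  psi g (natO p l + w) = w + (natO p ((g.2^-1)%g l) + jota (g.1 ((g.2^-1)%g l))).
Proof. by move=> hw; rewrite /psi cls_lwO // rr_lw. Qed.

Lemma psiM g h x : psi (sdp_mul g h) x = psi g (psi h x).
Proof.
case: g h => a s [b t].
rewrite {3}/psi /= addCA psi_lw /=; last exact: Pj_add (rr_P j x) (iota_P _).
rewrite /psi /= invMg permM permKV iota_add.
by rewrite (addC (jota (a _))) (addCA (natO p _)) addA.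
Qed.

Lemma zO_P : Pj j (zO p).
Proof. by rewrite /Pj vnat mod0n. Qed.

Lemma natO_z (i : nat) : natO p i = natO p i + zO p.
Proof. by rewrite addC add0. Qed.

Lemma psi_inj g h : (forall x, psi g x = psi h x) -> g = h.
Proof.
case: g h => a s [b t] E.
have E1 : forall i : 'I_(p j), natO p ((s^-1)%g i) + jota (a ((s^-1)%g i)) =
                             natO p ((t^-1)%g i) + jota (b ((t^-1)%g i)).
  move=> i; have := E (natO p i); rewrite natO_z !psi_lw; try exact: zO_P.
  by rewrite !add0.
have est : (s^-1)%g = (t^-1)%g.
  apply/permP => i; apply: ord_inj.
  have h1 := cls_lw (ltn_ord ((s^-1)%g i)) (iota_P (a ((s^-1)%g i))).
  have h2 := cls_lw (ltn_ord ((t^-1)%g i)) (iota_P (b ((t^-1)%g i))).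
  by rewrite -h1 -h2 E1.
have -> : s = t by rewrite -(invgK s) est invgK.
have -> : a = b.
  apply: functional_extensionality => l; apply: (@iota_inj p j).
  have := E1 (t l); rewrite est permK => /addI //.
by [].
Qed.

Definition unitG : G := (fun _ => zO (qs p j), 1%g).
Definition ginv (g : G) : G := (fun k => oppO (g.1 ((g.2^-1)%g k)), (g.2^-1)%g).

Lemma iota0 : jota (zO (qs p j)) = zO p.
Proof. by apply: odo_eq => m; rewrite viota /= mod0n muln0 mod0n. Qed.

Lemma psi1 x : psi unitG x = x.
Proof.
rewrite /psi /= invg1 perm1 iota0 (addC _ (zO p)) add0 addC.
by rewrite [RHS](decomp j x).
Qed.

Lemma mul_ginv g : sdp_mul g (ginv g) = unitG.
Proof.
case: g => a s; rewrite /sdp_mul /ginv /unitG /=; congr pair; last by rewrite mulgV.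
by apply: functional_extensionality => i; rewrite permK addN.
Qed.

Lemma ginv_mul g : sdp_mul (ginv g) g = unitG.
Proof.
case: g => a s; rewrite /sdp_mul /ginv /unitG /=; congr pair; last by rewrite mulVg.
by apply: functional_extensionality => i; rewrite addC addN.
Qed.

Lemma psi_cont g : odo_continuous (psi g).
Proof.
move=> x n; exists (maxn n j) => y hy.
have ej : v y j = v x j by apply: hy; rewrite leq_maxr.
have en : v y n = v x n by apply: hy; rewrite leq_maxl.
have ec : cls j y = cls j x by apply: ord_inj; rewrite /= ej.
have er : v (rr j y) n = v (rr j x) n by rewrite /rr !vadd !vopp !vnat ej en.
by rewrite !psi_def ec (vadd (rr j y)) (vadd (rr j x)) er.
Qed.

Lemma psi_shift g z : Pj j z -> forall x, psi g (x + z) = psi g x + z.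
Proof.
move=> hz x.
have ec : cls j (x + z) = cls j x.
  by apply: ord_inj; rewrite /= hz addn0 modn_small // vlt.
have er : rr j (x + z) = rr j x + z.
  have ev : v (x + z) j = v x j by rewrite vadd hz addn0 modn_small // vlt.
  by rewrite /rr ev addAC.
by rewrite !psi_def ec er addAC.
Qed.

Lemma psi_stab g : in_stab_aut (psi g).
Proof.
exists (p j); split; first exact: pP.
split.
  split; first exact: psi_cont.
  exists (psi (ginv g)); split; first exact: psi_cont.
  by split => x; rewrite -psiM ?ginv_mul ?mul_ginv psi1.
move=> x; rewrite !iterT psi_shift //.
by rewrite /Pj vnat modnn.
Qed.

Lemma psi_homeo_inj g : injective (psi g).
Proof.
move=> x y e; rewrite -(psi1 x) -(psi1 y) -(ginv_mul g) !psiM e //.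
Qed.

Lemma represent (F : X -> X) : odo_continuous F -> injective F ->
  (forall z, Pj j z -> forall x, F (x + z) = F x + z) ->
  exists g : G, forall x, psi g x = F x.
Proof.
move=> cF iF sF.
pose sig (i : 'I_(p j)) := cls j (F (natO p i)).
have sig_inj : injective sig.
  move=> i i' e.
  pose w := F (natO p i') + oppO (F (natO p i)).
  have vF : v (F (natO p i')) j = v (F (natO p i)) j by have := congr1 val e.
  have wP : Pj j w.
    rewrite /Pj /w vadd vopp vF modnDmr subnKC ?modnn //; exact: ltnW (vlt _ j).
  have hw : F (natO p i) + w = F (natO p i').
    by rewrite /w addCA addN addC add0.
  rewrite -sF in hw; last exact: wP.
  have := congr1 (fun y => v y j) (iF _ _ hw).
  by rewrite cls_lw ?rr_P // vnat_small // => /ord_inj.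
pose s := ((perm sig_inj)^-1)%g.
exists (fun l => kappa j (rr j (F (natO p (s l)))), s) => x.
have hs : forall l, cls j (F (natO p (s l))) = l.
  by move=> l; rewrite -/(sig (s l)) /s -[sig _]permE permKV.
rewrite /psi /= /s invgK permE.
set l := sig (cls j x).
rewrite iota_kappa; last exact: rr_P.
have e1 : s l = cls j x by rewrite /l /s -[sig _]permE permK.
have e2 : v (F (natO p (s l))) j = l by rewrite -[in RHS](hs l).
rewrite -e2 -decomp e1 addC -sF; last exact: rr_P.
by rewrite /= -decomp.
Qed.
End Psi.

Lemma lift_ex (p : scale) j (g : sdp (qs p j) (p j)) :
  exists g' : sdp (qs p j.+1) (p j.+1), forall x, psi g' x = psi g x.
Proof.
apply: represent; [exact: psi_cont | exact: psi_homeo_inj |].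
move=> z hz x; apply: psi_shift.
by rewrite /Pj -(coord_low z (leqnSn j)); move: hz; rewrite /Pj => ->; rewrite mod0n.
Qed.

Theorem theorem1p1 (p : scale) :
  exists (q : nat -> scale) (k : nat -> nat),
    (forall j, is_factor p (q j)) /\
    exists (f : forall j, sdp (q j) (p (k j)) -> sdp (q j.+1) (p (k j.+1)))
           (psi : forall j, sdp (q j) (p (k j)) -> odo p -> odo p),
      (forall j, injective (f j) /\
         forall g h, f j (sdp_mul g h) = sdp_mul (f j g) (f j h)) /\
      (forall j,
         (forall g h, (forall x, psi j g x = psi j h x) -> g = h) /\
         (forall g h x, psi j (sdp_mul g h) x = psi j g (psi j h x)) /\
         (forall g, in_stab_aut (psi j g))) /\
      (forall j g x, psi j.+1 (f j g) x = psi j g x) /\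
      (forall F : odo p -> odo p, in_stab_aut F ->
         exists j g, forall x, psi j g x = F x).
Proof.
exists (fun j => qs p j), (fun j => j); split; first by move=> j; exact: qs_factor.
pose f j (g : sdp (qs p j) (p j)) : sdp (qs p j.+1) (p j.+1) :=
  epsilon (inhabits (unitG p j.+1)) (fun g' => forall x, psi g' x = psi g x).
have fP : forall j g x, psi (f j g) x = psi g x.
  move=> j g; exact: (epsilon_spec (inhabits (unitG p j.+1))
     (fun g' => forall x, psi g' x = psi g x) (lift_ex g)).
exists f, (fun j => @psi p j); split; [|split; [|split]].
- move=> j; split.
    by move=> g h e; apply: psi_inj => x; rewrite -(fP j g x) -(fP j h x) e.
  by move=> g h; apply: psi_inj => x; rewrite fP !psiM !fP.
- move=> j; split; first exact: psi_inj.
  split; first exact: psiM.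
  exact: psi_stab.
- exact: fP.
- move=> F [n [n0 hF]].
  have [j hj] := aut_closure n0 hF.
  have [gi [_ [hgi _]]] := proj2 (proj1 hF).
  have iF : injective F by move=> x y e; rewrite -(hgi x) -(hgi y) e.
  have [g hg] := represent (proj1 (proj1 hF)) iF hj.
  by exists j, g.
Qed.
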